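(* Let $\Re$ be a commutative Krasner hyperring with identity $1\ne0$, $\phi:L(\Re)\to L(\Re)\cup\{\emptyset\}$ a function, and $T$ a $\phi$-prime proper hyperideal of $\Re$. (i) If $M$ is a hyperideal of $\Re$ with $M\subseteq T$, then $T/M$ is a $\phi_M$-prime hyperideal of $\Re/M$. (ii) If $S$ is a multiplicatively closed subset of $\Re$ with $T\cap S=\emptyset$ and $\phi(T)_S\subseteq\phi_S(T_S)$, then $T_S$ is a $\phi_S$-prime hyperideal of $\Re_S$.
   Context: Krasner hyperring: $(\Re,\oplus)$ canonical hypergroup, $(\Re,\circ)$ commutative semigroup with identity $1\ne0$, $0$ absorbing, distributive. Hyperideals, $L(\Re)$ as usual. For a hyperideal $M$, $\Re/M=\{a\oplus M\}$ is the quotient Krasner hyperring, and for a hyperideal $N\supseteq M$, $N/M=\{a\oplus M: a\in N\}$; $\phi_M:L(\Re/M)\to L(\Re/M)\cup\{\emptyset\}$ is $\phi_M(N/M)=(\phi(N)\oplus M)/M$, and $\emptyset$ if $\phi(N)=\emptyset$. For multiplicatively closed $S$ ($1\in S$, closed under $\circ$), $\Re_S$ is the localization (fractions $a/s$), $N_S=\{a/s: a\in N,s\in S\}$; for $J\in L(\Re_S)$, $J\cap\Re=\{a\in\Re: a/1\in J\}$ and $\phi_S(J)=(\phi(J\cap\Re))_S$, with $\phi_S(J)=\emptyset$ if $\phi(J\cap\Re)=\emptyset$. A hyperideal $N$ is $\psi$-prime if $a\circ b\in N$, $a\circ b\notin\psi(N)$ imply $a\in N$ or $b\in N$. *)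

(* Defs.v *)
From Stdlib Require Import ClassicalEpsilon.
Set Implicit Arguments.

(** * Raw (hyper)ring data: a carrier, a hyperaddition given as a ternary
    relation ([hadd x y z] means z ∈ x ⊕ y), zero, additive inverse,
    multiplication, one.  Sets are predicates [car -> Prop]. *)
Record hdata := HData {
  car  : Type;
  hadd : car -> car -> car -> Prop;
  hzero : car;
  hneg : car -> car;
  hmul : car -> car -> car;
  hone : car
}.

Section Basic.
Variable H : hdata.
Local Notation R := (car H).
Local Notation "x * y" := (hmul H x y).

Definition is_krasner : Prop :=
  (forall x y : R, exists z, hadd H x y z) /\
  (forall x y z w : R,
     (exists u, hadd H x y u /\ hadd H u z w) <->
     (exists v, hadd H y z v /\ hadd H x v w)) /\
  (forall x y z : R, hadd H x y z <-> hadd H y x z) /\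
  (forall x y : R, hadd H (hzero H) x y <-> y = x) /\
  (forall x : R, hadd H x (hneg H x) (hzero H)) /\
  (forall x y : R, hadd H x y (hzero H) -> y = hneg H x) /\
  (forall x y z : R, hadd H x y z ->
     hadd H (hneg H x) z y /\ hadd H z (hneg H y) x) /\
  (forall x y z : R, x * (y * z) = (x * y) * z) /\
  (forall x y : R, x * y = y * x) /\
  (forall x : R, hone H * x = x) /\
  hone H <> hzero H /\
  (forall x : R, hzero H * x = hzero H) /\
  (* distributivity: x ∘ (y ⊕ z) = x∘y ⊕ x∘z *)
  (forall x y z w : R,
     hadd H (x * y) (x * z) w <-> exists v, hadd H y z v /\ w = x * v).

Definition hyperideal (I : R -> Prop) : Prop :=
  (exists x, I x) /\
  (forall a b c, I a -> I b -> hadd H a (hneg H b) c -> I c) /\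
  (forall r a, I a -> I (r * a)).

Definition proper (I : R -> Prop) : Prop := exists x, ~ I x.

Definition psi_prime (psi : (R -> Prop) -> (R -> Prop)) (N : R -> Prop) : Prop :=
  hyperideal N /\
  (forall a b : R, N (a * b) -> ~ psi N (a * b) -> N a \/ N b).

(** phi : L(R) -> L(R) ∪ {∅} (∅ is the empty predicate) *)
Definition phi_fun (phi : (R -> Prop) -> (R -> Prop)) : Prop :=
  forall N, hyperideal N -> hyperideal (phi N) \/ (forall x, ~ phi N x).

Record mcset := MCSet {
  mcS :> R -> Prop;
  mc1 : mcS (hone H);
  mcM : forall x y, mcS x -> mcS y -> mcS (x * y)
}.

End Basic.

Arguments is_krasner : clear implicits.
Arguments hyperideal : clear implicits.
Arguments proper : clear implicits.
Arguments psi_prime : clear implicits.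
Arguments phi_fun : clear implicits.

Section Quotient.
Variables (H : hdata) (M : car H -> Prop).
Local Notation R := (car H).
Local Notation "x * y" := (hmul H x y).

Definition coset (a : R) : R -> Prop :=
  fun x => exists m, M m /\ hadd H a m x.

Definition qcar : Type := { X : R -> Prop | exists a, X = coset a }.

Definition qcls (a : R) : qcar := exist _ (coset a) (ex_intro _ a eq_refl).

Definition qrep (X : qcar) : R :=
  proj1_sig (constructive_indefinite_description _ (proj2_sig X)).

(** (a⊕M) ⊕ (b⊕M) = { c⊕M : c ∈ a⊕b },  -(a⊕M) = (-a)⊕M,
    (a⊕M)∘(b⊕M) = (a∘b)⊕M, zero 0⊕M = M, one 1⊕M *)
Definition quotient : hdata :=
  @HData qcar
    (fun X Y Z => exists c, hadd H (qrep X) (qrep Y) c /\ Z = qcls c)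
    (qcls (hzero H))
    (fun X => qcls (hneg H (qrep X)))
    (fun X Y => qcls (qrep X * qrep Y))
    (qcls (hone H)).

Definition qideal (N : R -> Prop) : qcar -> Prop :=
  fun X => exists a, N a /\ X = qcls a.

(** phi_M (N/M) = (phi(N) ⊕ M)/M  (which is ∅ when phi(N) = ∅);
    N is recovered from J = N/M as {a | a⊕M ∈ J}. *)
Definition phiM (phi : (R -> Prop) -> (R -> Prop)) (J : qcar -> Prop)
  : qcar -> Prop :=
  let N := fun a => J (qcls a) in
  qideal (fun c => exists p m, phi N p /\ M m /\ hadd H p m c).

End Quotient.

Section Localization.
Variables (H : hdata) (S : mcset H).
Local Notation R := (car H).
Local Notation "x * y" := (hmul H x y).

(** the fraction a/s, i.e. the class of (a,s) under
    (a,s) ~ (b,t)  iff  u∘a∘t = u∘b∘s for some u ∈ S *)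
Definition frac (a s : R) : R * R -> Prop :=
  fun p => S (snd p) /\ exists u, S u /\ u * (a * snd p) = u * (fst p * s).

Definition lcar : Type :=
  { X : R * R -> Prop | exists a s, S s /\ X = frac a s }.

Definition lcls (a s : R) (Hs : S s) : lcar :=
  exist _ (frac a s) (ex_intro _ a (ex_intro _ s (conj Hs eq_refl))).

Definition lrep_sig (X : lcar) : { p : R * R | S (snd p) /\ proj1_sig X = frac (fst p) (snd p) } :=
  let e := constructive_indefinite_description _ (proj2_sig X) in
  let f := constructive_indefinite_description _ (proj2_sig e) in
  exist _ (proj1_sig e, proj1_sig f) (proj2_sig f).

Definition lrep (X : lcar) : R * R := proj1_sig (lrep_sig X).

Definition lrep_S (X : lcar) : S (snd (lrep X)) := proj1 (proj2_sig (lrep_sig X)).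

(** a/s ⊕ b/t = { c/(st) : c ∈ a∘t ⊕ b∘s }, -(a/s) = (-a)/s,
    (a/s)(b/t) = (ab)/(st), zero 0/1, one 1/1 *)
Definition localization : hdata :=
  @HData lcar
    (fun X Y Z =>
       exists c, hadd H (fst (lrep X) * snd (lrep Y)) (fst (lrep Y) * snd (lrep X)) c
                 /\ proj1_sig Z = frac c (snd (lrep X) * snd (lrep Y)))
    (@lcls (hzero H) (hone H) (mc1 S))
    (fun X => @lcls (hneg H (fst (lrep X))) (snd (lrep X)) (lrep_S X))
    (fun X Y => @lcls (fst (lrep X) * fst (lrep Y)) (snd (lrep X) * snd (lrep Y))
                  (@mcM H S _ _ (lrep_S X) (lrep_S Y)))
    (@lcls (hone H) (hone H) (mc1 S)).

Definition lideal (N : R -> Prop) : lcar -> Prop :=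
  fun X => exists a s, N a /\ S s /\ proj1_sig X = frac a s.

(** J ∩ R = { a ∈ R : a/1 ∈ J } *)
Definition contract (J : lcar -> Prop) : R -> Prop :=
  fun a => J (@lcls a (hone H) (mc1 S)).

(** phi_S(J) = (phi(J ∩ R))_S  (which is ∅ when phi(J ∩ R) = ∅) *)
Definition phiS (phi : (R -> Prop) -> (R -> Prop)) (J : lcar -> Prop)
  : lcar -> Prop :=
  lideal (phi (contract J)).

End Localization.

Arguments quotient : clear implicits.
Arguments qideal : clear implicits.
Arguments phiM : clear implicits.
Arguments localization : clear implicits.
Arguments lideal : clear implicits.
Arguments phiS : clear implicits.
Arguments mcset : clear implicits.

(* Main.v *)
Require Import Defs.
From Stdlib Require Import ClassicalEpsilon FunctionalExtensionality PropExtensionality ProofIrrelevance.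

Section K.
Variable H : hdata.
Hypothesis HK : is_krasner H.
Local Notation R := (car H).
Local Notation "x * y" := (hmul H x y).

Ltac kk := destruct HK as (k1&k2&k3&k4&k5&k6&k7&k8&k9&k10&k11&k12&k13).

Lemma hcomm x y z : hadd H x y z -> hadd H y x z.
Proof. kk. apply k3. Qed.
Lemma hadd0r x : hadd H x (hzero H) x.
Proof. kk. apply k3, k4; reflexivity. Qed.
Lemma hadd0l x : hadd H (hzero H) x x.
Proof. kk. apply k4; reflexivity. Qed.
Lemma negneg x : hneg H (hneg H x) = x.
Proof. kk. symmetry. apply k6. apply k3. apply k5. Qed.
Lemma mulA x y z : x * (y * z) = (x * y) * z.
Proof. kk. apply k8. Qed.
Lemma mulC x y : x * y = y * x.
Proof. kk. apply k9. Qed.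
Lemma mul1 x : hone H * x = x.
Proof. kk. apply k10. Qed.
Lemma mul_swap x y z : x * (y * z) = y * (x * z).
Proof. rewrite mulA, (mulC x y), <- mulA. reflexivity. Qed.
Lemma distr x y z v : hadd H y z v -> hadd H (x * y) (x * z) (x * v).
Proof. kk. intro h. apply k13. exists v; auto. Qed.
Lemma mul_neg w b : w * hneg H b = hneg H (w * b).
Proof. kk. apply k6. assert (E : hzero H = w * hzero H) by (rewrite mulC; auto).
  rewrite E. apply distr. apply k5. Qed.

Section Ideal.
Variable I : R -> Prop.
Hypothesis HI : hyperideal H I.
Lemma I0 : I (hzero H).
Proof. destruct HI as ((x&Ix)&c&_). kk. apply (c x x); auto. Qed.
Lemma Ineg b : I b -> I (hneg H b).
Proof. intro Ib. destruct HI as (_&c&_). apply (c (hzero H) b); auto. apply I0. apply hadd0l. Qed.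
Lemma Iadd a b c : I a -> I b -> hadd H a b c -> I c.
Proof. intros Ia Ib h. destruct HI as (_&cl&_). apply (cl a (hneg H b)); auto.
  apply Ineg; auto. rewrite negneg; auto. Qed.
Lemma Imul r a : I a -> I (r * a).
Proof. destruct HI as (_&_&m). auto. Qed.
Lemma Imulr r a : I a -> I (a * r).
Proof. rewrite mulC. apply Imul. Qed.
End Ideal.

Section Quot.
Variables (M T : R -> Prop).
Hypotheses (HM : hyperideal H M) (HT : hyperideal H T) (MT : forall x, M x -> T x).

Lemma qcls_rep X : qcls H M (qrep X) = X.
Proof. destruct X as [X pX]. unfold qrep. simpl.
  destruct (constructive_indefinite_description _ _) as [a Ha]. simpl.
  subst X. unfold qcls. f_equal. apply proof_irrelevance. Qed.

Lemma qcls_inv x y : qcls H M x = qcls H M y -> T y -> T x.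
Proof. intros E Ty. apply (f_equal (@proj1_sig _ _)) in E. simpl in E.
  assert (C : coset H M x x) by (exists (hzero H); split; [apply I0; auto | apply hadd0r; auto]).
  rewrite E in C. destruct C as (m & Mm & Hm). apply (Iadd _ HT y m); auto. Qed.

Lemma qideal_rep X : qideal H M T X -> T (qrep X).
Proof. intros (a & Ta & ->). apply qcls_inv with a; auto. apply qcls_rep. Qed.

Lemma qideal_of_rep X : T (qrep X) -> qideal H M T X.
Proof. intro h. exists (qrep X); split; auto. symmetry; apply qcls_rep. Qed.

Lemma qideal_cls_inv a : qideal H M T (qcls H M a) -> T a.
Proof. intro h. apply qcls_inv with (qrep (qcls H M a)).
  symmetry; apply qcls_rep. apply qideal_rep; auto. Qed.

Lemma N_eq : (fun a => qideal H M T (qcls H M a)) = T.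
Proof. extensionality a. apply propositional_extensionality. split.
  apply qideal_cls_inv. intro; exists a; auto. Qed.

Lemma part1 phi : psi_prime H phi T ->
  psi_prime (quotient H M) (phiM H M phi) (qideal H M T).
Proof. intros [_ HP]. split.
  - split; [|split].
    + destruct HT as ((x&Tx)&_). exists (qcls H M x). exists x; auto.
    + intros A B C HA HB (c & Hc & ->). exists c; split; auto.
      refine (Iadd _ HT _ _ _ (qideal_rep _ HA) _ Hc).
      apply qideal_rep. exists (hneg H (qrep B)); split; auto.
      apply Ineg; auto. apply qideal_rep; auto.
    + intros r A HA. exists (qrep r * qrep A); split; auto.
      apply Imul; auto. apply qideal_rep; auto.
  - intros A B HAB Hn. simpl in HAB, Hn.
    apply qideal_cls_inv in HAB.
    destruct (HP _ _ HAB) as [h|h].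
    + intro Hp. apply Hn. unfold phiM. cbv zeta.
      exists (qrep A * qrep B). split; auto.
      exists (qrep A * qrep B), (hzero H). split.
      rewrite N_eq; exact Hp. split. apply I0; auto. apply hadd0r; auto.
    + left; apply qideal_of_rep; auto.
    + right; apply qideal_of_rep; auto.
Qed.
End Quot.

Section Loc.
Variables (S : mcset H) (T : R -> Prop).
Hypothesis HT : hyperideal H T.

Lemma frac_self a s : S s -> frac S a s (a, s).
Proof. intro h. split; auto. exists (hone H); split; [apply mc1 | reflexivity]. Qed.

Lemma lrep_spec (X : lcar S) : proj1_sig X = frac S (fst (lrep X)) (snd (lrep X)).
Proof. exact (proj2 (proj2_sig (lrep_sig X))). Qed.

Lemma frac_scale a s w : S w -> frac S a s = frac S (w * a) (w * s).
Proof. intro Sw. extensionality p. apply propositional_extensionality.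
  unfold frac; split; intros [Sp (u & Su & Eu)]; split; auto.
  - exists u; split; auto.
    rewrite <- (mulA w a), (mul_swap u w), (mul_swap (fst p) w), (mul_swap u w), Eu; auto.
  - exists (u * w); split; [apply mcM; auto|].
    rewrite <- !mulA. rewrite <- (mulA w a), (mul_swap (fst p) w) in Eu; auto.
Qed.

Lemma lideal_of (P : R -> Prop) (X : lcar S) a s w : S w -> P (w * a) ->
  proj1_sig X = frac S a s -> S s -> lideal H S P X.
Proof. intros Sw Pw E Ss. exists (w * a), (w * s). split; auto. split.
  apply mcM; auto. rewrite E. apply frac_scale; auto. Qed.

Lemma lideal_inv (X : lcar S) a' s' : lideal H S T X -> proj1_sig X = frac S a' s' -> S s' ->
  exists w, S w /\ T (w * a').
Proof. intros (a & s & Ta & Ss & E) E' Ss'.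
  assert (F : frac S a' s' (a', s')) by (apply frac_self; auto).
  rewrite <- E', E in F. destruct F as [_ (u & Su & Eu)]. simpl in Eu.
  exists (u * s). split. apply mcM; auto.
  rewrite <- mulA, (mulC s a'), <- Eu. apply Imul; auto. apply Imulr; auto. Qed.

Lemma part2 phi : psi_prime H phi T ->
  (forall X, lideal H S (phi T) X -> phiS H S phi (lideal H S T) X) ->
  psi_prime (localization H S) (phiS H S phi) (lideal H S T).
Proof. intros [_ HP] Hsub. split.
  - split; [|split].
    + destruct HT as ((x&Tx)&_). exists (@lcls H S x (hone H) (mc1 S)). exists x, (hone H).
      repeat split; auto. apply mc1.
    + intros A B C HA HB (c & Hc & EC).
      set (nB := hneg (localization H S) B) in *.
      assert (HnB : lideal H S T nB).
      { destruct (lideal_inv B _ _ HB (lrep_spec B) (lrep_S B)) as (w & Sw & Tw).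
        apply lideal_of with (hneg H (fst (lrep B))) (snd (lrep B)) w; auto.
        rewrite mul_neg; auto. apply Ineg; auto. apply lrep_S. }
      destruct (lideal_inv A _ _ HA (lrep_spec A) (lrep_S A)) as (w1 & Sw1 & Tw1).
      destruct (lideal_inv nB _ _ HnB (lrep_spec nB) (lrep_S nB)) as (w2 & Sw2 & Tw2).
      apply lideal_of with c (snd (lrep A) * snd (lrep nB)) (w1 * w2); auto.
      apply mcM; auto.
      refine (Iadd _ HT _ _ _ _ _ (distr (w1 * w2) _ _ _ Hc)).
      * rewrite <- mulA, (mul_swap w2), (mulA w1). apply Imulr; auto.
      * rewrite (mulC w1 w2), <- mulA, (mul_swap w1), (mulA w2). apply Imulr; auto.
      * apply mcM; apply lrep_S.
    + intros r A HA.
      destruct (lideal_inv A _ _ HA (lrep_spec A) (lrep_S A)) as (w1 & Sw1 & Tw1).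
      apply lideal_of with (fst (lrep r) * fst (lrep A)) (snd (lrep r) * snd (lrep A)) w1; auto.
      rewrite mul_swap; auto. apply Imul; auto.
      apply mcM; apply lrep_S.
  - intros A B HAB Hn.
    destruct (lideal_inv _ (fst (lrep A) * fst (lrep B)) (snd (lrep A) * snd (lrep B)) HAB
      eq_refl (mcM _ _ _ (lrep_S A) (lrep_S B))) as (w & Sw & Tw).
    rewrite mulA in Tw.
    destruct (HP _ _ Tw) as [h|h].
    + intro Hp. apply Hn. apply Hsub.
      apply lideal_of with (fst (lrep A) * fst (lrep B)) (snd (lrep A) * snd (lrep B)) w; auto.
      rewrite mulA; auto. apply mcM; apply lrep_S.
    + left. apply lideal_of with (fst (lrep A)) (snd (lrep A)) w; auto.
      apply lrep_spec. apply lrep_S.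
    + right. apply lideal_of with (fst (lrep B)) (snd (lrep B)) (hone H); auto.
      apply mc1. rewrite mul1; auto. apply lrep_spec. apply lrep_S.
Qed.
End Loc.
End K.

Theorem mainTheorem10 (H : hdata) (HK : is_krasner H)
  (phi : (car H -> Prop) -> (car H -> Prop)) (Hphi : phi_fun H phi)
  (T : car H -> Prop) (HT : psi_prime H phi T) (HTp : proper H T) :
  (* (i) *)
  (forall M : car H -> Prop, hyperideal H M -> (forall x, M x -> T x) ->
     psi_prime (quotient H M) (phiM H M phi) (qideal H M T)) /\
  (* (ii) *)
  (forall S : mcset H, (forall x, T x -> ~ S x) ->
     (forall X, lideal H S (phi T) X -> phiS H S phi (lideal H S T) X) ->
     psi_prime (localization H S) (phiS H S phi) (lideal H S T)).
Proof.
  split.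
  - intros M HM MT. apply part1; auto. apply HT.
  - intros S _ Hsub. apply part2; auto. apply HT.
Qed.
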